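(* Let $G=(V,E)$ be a simple undirected graph with node features $x_v\in\mathbb{R}$, $v\in V$, and consider the message passing neural network defined by $h_v^{(0)}=x_v$ and, for $\ell\ge 0$, $$h_v^{(\ell+1)}=\phi_\ell\Big(h_v^{(\ell)},\ \sum_{u\in V}\hat a_{vu}\,\psi_\ell\big(h_v^{(\ell)},h_u^{(\ell)}\big)\Big),$$ where $\phi_\ell,\psi_\ell:\mathbb{R}^2\to\mathbb{R}$ are differentiable. Let $i,s\in V$ with $s\in S_{r+1}(i)$ for some integer $r\ge 0$. If $|\nabla\phi_\ell|\le\alpha$ and $|\nabla\psi_\ell|\le\beta$ (i.e. all partial derivatives are bounded in absolute value by $\alpha$, resp. $\beta$) for all $0\le\ell\le r$, then $$\left|\frac{\partial h_i^{(r+1)}}{\partial x_s}\right|\le(\alpha\beta)^{r+1}\big(\hat A^{r+1}\big)_{is}.$$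
   Context: $A$ is the adjacency matrix of $G$, $D$ the diagonal degree matrix, and $\hat A=(\hat a_{uv})=(D+I)^{-1/2}(A+I)(D+I)^{-1/2}$ is the normalized augmented adjacency matrix. $d_G$ is the shortest-path distance and $S_r(i)=\{v\in V: d_G(i,v)=r\}$. *)

(* Defs.v *)
From HB Require Import structures.
From Stdlib Require Import Reals.
From mathcomp Require Import all_boot all_order all_algebra.
From mathcomp Require Import Rstruct.
From Coquelicot Require Import Coquelicot.

Set Implicit Arguments.
Unset Strict Implicit.
Unset Printing Implicit Defensive.

Import GRing.Theory Num.Theory.

Local Open Scope ring_scope.

Definition simple_graph (n : nat) (e : rel 'I_n) : Prop :=
  symmetric e /\ irreflexive e.

Definition adjmx (n : nat) (e : rel 'I_n) : 'M[R]_n :=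
  \matrix_(i, j) (e i j)%:R.

Definition deg (n : nat) (e : rel 'I_n) (i : 'I_n) : nat := #|[set j | e i j]|.

Definition degmx (n : nat) (e : rel 'I_n) : 'M[R]_n :=
  diag_mx (\row_i (deg e i)%:R).

Definition degI_invsqrt (n : nat) (e : rel 'I_n) : 'M[R]_n :=
  diag_mx (\row_i (Num.sqrt ((deg e i)%:R + 1))^-1).

Definition Ahat (n : nat) (e : rel 'I_n) : 'M[R]_n :=
  degI_invsqrt e *m (adjmx e + 1%:M) *m degI_invsqrt e.

Fixpoint walk (n : nat) (e : rel 'I_n) (k : nat) (i j : 'I_n) : Prop :=
  match k with
  | 0 => i = j
  | k'.+1 => exists u, e i u /\ walk e k' u j
  end.

Definition dist_eq (n : nat) (e : rel 'I_n) (i j : 'I_n) (k : nat) : Prop :=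
  walk e k i j /\ forall m, (m < k)%N -> ~ walk e m i j.

Definition sphere (n : nat) (e : rel 'I_n) (k : nat) (i : 'I_n) : 'I_n -> Prop :=
  fun v => dist_eq e i v k.

Fixpoint mpnn (n : nat) (e : rel 'I_n) (phi psi : nat -> R -> R -> R)
    (l : nat) (x : 'I_n -> R) : 'I_n -> R :=
  match l with
  | 0 => x
  | l'.+1 => fun v =>
      let h := mpnn e phi psi l' x in
      phi l' (h v) (\sum_(u < n) Ahat e v u * psi l' (h v) (h u))
  end.

Definition upd (n : nat) (x : 'I_n -> R) (s : 'I_n) (t : R) : 'I_n -> R :=
  fun v => if v == s then t else x v.

Definition diff_grad_bounded (f : R -> R -> R) (c : R) : Prop :=
  forall a b : R, exists lx ly : R,
    differentiable_pt_lim f a b lx ly /\ (Rabs lx <= c)%R /\ (Rabs ly <= c)%R.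

(* Main.v *)
Require Import Defs.
From Stdlib Require Import Reals FunctionalExtensionality.
From mathcomp Require Import all_boot all_order all_algebra.
From mathcomp Require Import Rstruct.
From mathcomp Require Import lra.
From Stdlib Require Import Classical.
From Coquelicot Require Import Coquelicot.

Section Helpers.
Import Order.TTheory GRing.Theory Num.Theory.
Local Open Scope ring_scope.

Lemma is_derive_sum (I : Type) (rs : seq I) (F : I -> R -> R) (dF : I -> R) t0 :
  (forall i, is_derive (F i) t0 (dF i)) ->
  is_derive (fun t => \sum_(i <- rs) F i t) t0 (\sum_(i <- rs) dF i).
Proof.
move=> H; elim: rs => [|a rs IH].
  rewrite big_nil; apply: (@is_derive_ext R_AbsRing R_NormedModule (fun _ => 0)).
    by move=> t; rewrite big_nil.
  exact: is_derive_const.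
rewrite big_cons; apply: (@is_derive_ext R_AbsRing R_NormedModule (fun t => F a t + \sum_(i <- rs) F i t)).
  by move=> t; rewrite big_cons.
exact: (is_derive_plus _ _ _ _ _ (H a) IH).
Qed.

Lemma chain2 (f : R -> R -> R) (g1 g2 : R -> R) t0 lx ly d1 d2 :
  differentiable_pt_lim f (g1 t0) (g2 t0) lx ly ->
  is_derive g1 t0 d1 -> is_derive g2 t0 d2 ->
  is_derive (fun t => f (g1 t) (g2 t)) t0 (lx * d1 + ly * d2).
Proof.
move=> Hf /is_derive_Reals H1 /is_derive_Reals H2; apply/is_derive_Reals.
exact: derivable_pt_lim_comp_2d.
Qed.

Arguments chain2 {f g1 g2 t0 lx ly d1 d2}.

Lemma Ahat_entry n (e : rel 'I_n) u w :
  Ahat e u w = (Num.sqrt ((deg e u)%:R + 1))^-1 *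
     ((e u w)%:R + (u == w)%:R) * (Num.sqrt ((deg e w)%:R + 1))^-1.
Proof.
by rewrite /Ahat /degI_invsqrt mul_mx_diag mul_diag_mx !mxE.
Qed.

Lemma Ahat_ge0 n (e : rel 'I_n) u w : 0 <= Ahat e u w.
Proof.
rewrite Ahat_entry; apply: mulr_ge0; first apply: mulr_ge0.
- by rewrite invr_ge0 sqrtr_ge0.
- by apply: addr_ge0; apply: ler0n.
- by rewrite invr_ge0 sqrtr_ge0.
Qed.

Lemma Ahat_nz n (e : rel 'I_n) u w : Ahat e u w != 0 -> u = w \/ e u w.
Proof.
rewrite Ahat_entry; case: (e u w); first by right.
case: (eqVneq u w) => [->|_]; first by left.
by rewrite mulr0n addr0 mulr0 mul0r eqxx.
Qed.

Lemma Ahatpow_ge0 n (e : rel 'I_n) l u w : 0 <= (Ahat e ^+ l) u w.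
Proof.
elim: l u w => [|l IH] u w.
  by rewrite expr0 mxE; apply: ler0n.
rewrite exprS -mulmxE mxE; apply: sumr_ge0 => k _.
by apply: mulr_ge0; [apply: Ahat_ge0|apply: IH].
Qed.

Lemma Ahatpow_S n (e : rel 'I_n) l u w :
  (Ahat e ^+ l.+1) u w = \sum_k Ahat e u k * (Ahat e ^+ l) k w.
Proof. by rewrite exprS -mulmxE mxE. Qed.


Lemma RabsE' (x : R) : Rabs x = `|x|. Proof. by []. Qed.

Lemma zero_lem n (e : rel 'I_n) phi psi x s :
  forall l w, (forall m, (m <= l)%N -> ~ walk e m w s) ->
  forall t, mpnn e phi psi l (upd x s t) w = mpnn e phi psi l x w.
Proof.
elim=> [|l IH] w Hw t /=.
  rewrite /upd; case: eqP => // Ews; exfalso; exact: (Hw 0%N).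
have Hw' : forall m, (m <= l)%N -> ~ walk e m w s.
  by move=> m Hm; apply: Hw; apply: leqW.
rewrite (IH w Hw'); congr (phi l _ _); apply: eq_bigr => u _.
case: (eqVneq (Ahat e w u) 0) => [->|/Ahat_nz [<-|ewu]]; first by rewrite !mul0r.
  by rewrite (IH w Hw').
have Hu : forall m, (m <= l)%N -> ~ walk e m u s.
  by move=> m Hm Hwk; apply: (Hw m.+1) => //; exists u.
by rewrite (IH u Hu).
Qed.

Lemma ex_lem n (e : rel 'I_n) phi psi x s alpha beta :
  forall l, (forall k, (k < l)%N ->
     diff_grad_bounded (phi k) alpha /\ diff_grad_bounded (psi k) beta) ->
  forall w t0, ex_derive (fun t => mpnn e phi psi l (upd x s t) w) t0.
Proof.
elim=> [|l IH] Hk w t0 /=.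
  rewrite /upd; case: eqP => _; [exact: ex_derive_id | exact: ex_derive_const].
have IH' := IH (fun k hk => Hk k (leqW hk)).
have [Hphi Hpsi] := Hk l (ltnSn l).
set a := fun t => mpnn e phi psi l (upd x s t) w.
set g := fun u t => mpnn e phi psi l (upd x s t) u.
have [lx [ly [Hd _]]] := Hphi (a t0)
  (\sum_(u < n) Ahat e w u * psi l (a t0) (g u t0)).
have Hb : is_derive (fun t => \sum_(u < n) Ahat e w u * psi l (a t) (g u t)) t0
   (\sum_(u < n) Derive (fun t => Ahat e w u * psi l (a t) (g u t)) t0).
  apply: is_derive_sum => u; apply: Derive_correct.
  have [mx [my [Hd' _]]] := Hpsi (a t0) (g u t0).
  eexists; apply: is_derive_scal.
  exact: (chain2 Hd' (Derive_correct _ _ (IH' w t0)) (Derive_correct _ _ (IH' u t0))).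
eexists; exact: (chain2 Hd (Derive_correct _ _ (IH' w t0)) Hb).
Qed.


Lemma Derive_zero n (e : rel 'I_n) phi psi x s l w t0 :
  (forall m, (m <= l)%N -> ~ walk e m w s) ->
  Derive (fun t => mpnn e phi psi l (upd x s t) w) t0 = 0.
Proof.
move=> H.
rewrite (functional_extensionality (fun t => mpnn e phi psi l (upd x s t) w)
   (fun _ => mpnn e phi psi l x w)); last by move=> t; apply: zero_lem.
exact: Derive_const.
Qed.

Lemma dgb_ge0 f c : diff_grad_bounded f c -> 0 <= c.
Proof.
move=> /(_ 0 0) [lx [_ [_ [H _]]]].
exact: le_trans (normr_ge0 lx) H.
Qed.

Lemma bound_lem n (e : rel 'I_n) phi psi x s alpha beta :
  forall l, (forall k, (k < l)%N ->
     diff_grad_bounded (phi k) alpha /\ diff_grad_bounded (psi k) beta) ->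
  forall u, walk e l u s -> (forall m, (m < l)%N -> ~ walk e m u s) ->
  forall t0, Rle (Rabs (Derive (fun t => mpnn e phi psi l (upd x s t) u) t0))
     (Rmult (pow (Rmult alpha beta) l) ((Ahat e ^+ l) u s)).
Proof.
elim=> [|l IH] Hk u Hw Hmin t0.
  rewrite /= in Hw; subst u.
  rewrite (functional_extensionality (fun t => mpnn e phi psi 0 (upd x s t) s)
    (fun t => t)); last by move=> t; rewrite /= /upd eqxx.
  rewrite Derive_id expr0 mxE eqxx /= Rabs_R1 Rmult_1_l; exact: Rle_refl.
have IHk : forall k, (k < l)%N ->
   diff_grad_bounded (phi k) alpha /\ diff_grad_bounded (psi k) beta.
  by move=> k hk; apply: Hk; apply: leqW.
have IH' := IH IHk.
have Hex := @ex_lem n e phi psi x s alpha beta l IHk.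
have [Hphi Hpsi] := Hk l (ltnSn l).
have al0 := dgb_ge0 _ _ Hphi; have be0 := dgb_ge0 _ _ Hpsi.
have Hnz : forall m, (m <= l)%N -> ~ walk e m u s by move=> m hm; apply: Hmin.
set g := fun w t => mpnn e phi psi l (upd x s t) w.
have Da : Derive (g u) t0 = 0 by apply: Derive_zero.
set P := pow (Rmult alpha beta) l.
have P0 : 0 <= P by apply/RleP; apply: pow_le; apply/RleP; apply: mulr_ge0.
set T := fun w t => Ahat e u w * psi l (g u t) (g w t).
have HT : forall w, ex_derive (T w) t0 /\
    Rle (Rabs (Derive (T w) t0)) (beta * (Ahat e u w * (P * (Ahat e ^+ l) w s))).
  move=> w.
  have [mx [my [Hd [_ Hmy]]]] := Hpsi (g u t0) (g w t0).
  have HTd : is_derive (T w) t0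
     (Ahat e u w * (mx * Derive (g u) t0 + my * Derive (g w) t0)).
    apply: is_derive_scal.
    exact: (chain2 Hd (Derive_correct _ _ (Hex u t0)) (Derive_correct _ _ (Hex w t0))).
  split; first by exists (Ahat e u w * (mx * Derive (g u) t0 + my * Derive (g w) t0)).
  rewrite (is_derive_unique _ _ _ HTd) Da.
  have Hc : Ahat e u w * `|Derive (g w) t0| <= Ahat e u w * (P * (Ahat e ^+ l) w s).
    case: (eqVneq (Ahat e u w) 0) => [->|/Ahat_nz Huw]; first by rewrite !mul0r.
    have Hsh : forall m, (m < l)%N -> ~ walk e m w s.
      move=> m hm Hwk; case: Huw => [Huw|euw].
        by subst w; apply: (Hmin m) => //; apply: ltnW.
      by apply: (Hmin m.+1) => //; exists w.
    case: (classic (walk e l w s)) => Hwl.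
      apply: ler_wpM2l; first exact: Ahat_ge0.
      by apply/RleP; apply: IH'.
    have Hz : forall m, (m <= l)%N -> ~ walk e m w s.
      move=> m; rewrite leq_eqVlt => /orP [/eqP ->//|]; exact: Hsh.
    rewrite (Derive_zero _ _ _ _ _ _ _ _ _ Hz) normr0 mulr0.
    apply: mulr_ge0; first exact: Ahat_ge0.
    by apply: mulr_ge0 => //; apply: Ahatpow_ge0.
  have A0 := Ahat_ge0 _ e u w.
  apply/RleP; rewrite RabsE' in Hmy; rewrite RabsE'.
  rewrite ?RmultE ?RplusE mulr0 add0r !normrM (ger0_norm A0).
  have N0 : 0 <= `|Derive (g w) t0| by apply: normr_ge0.
  have M0 : 0 <= `|my| by apply: normr_ge0.
  have AN0 : 0 <= Ahat e u w * `|Derive (g w) t0| by apply: mulr_ge0.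
  nra.
have Hb : is_derive (fun t => \sum_(w < n) T w t) t0 (\sum_(w < n) Derive (T w) t0).
  by apply: is_derive_sum => w; apply: Derive_correct; case: (HT w).
have [lx [ly [Hd [_ Hly]]]] := Hphi (g u t0) (\sum_(w < n) T w t0).
have HD := chain2 Hd (Derive_correct _ _ (Hex u t0)) Hb.
have -> : Derive (fun t => mpnn e phi psi l.+1 (upd x s t) u) t0 =
   lx * Derive (g u) t0 + ly * \sum_(w < n) Derive (T w) t0.
  by apply: is_derive_unique; exact: HD.
rewrite Da.
have HS : `|\sum_(w < n) Derive (T w) t0| <= beta * (P * (Ahat e ^+ l.+1) u s).
  apply: le_trans (ler_norm_sum _ _ _) _.
  rewrite Ahatpow_S !mulr_sumr; apply: ler_sum => w _.
  rewrite [P * _]mulrCA; apply/RleP; exact: (HT w).2.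
apply/RleP; rewrite RabsE' in Hly; rewrite RabsE'.
change (pow (alpha * beta) l.+1) with (alpha * beta * P).
rewrite ?RmultE ?RplusE mulr0 add0r normrM.
have N0 : 0 <= `|\sum_(w < n) Derive (T w) t0| by apply: normr_ge0.
have M0 : 0 <= `|ly| by apply: normr_ge0.
have Q0 : 0 <= (Ahat e ^+ l.+1) u s by apply: Ahatpow_ge0.
nra.
Qed.

End Helpers.

Theorem lemma1 (n : nat) (e : rel 'I_n) (phi psi : nat -> R -> R -> R)
    (alpha beta : R) (r : nat) (i s : 'I_n) :
  simple_graph e ->
  sphere e r.+1 i s ->
  (forall l, (l <= r)%N ->
     diff_grad_bounded (phi l) alpha /\ diff_grad_bounded (psi l) beta) ->
  forall x : 'I_n -> R,
    ex_derive (fun t => mpnn e phi psi r.+1 (upd x s t) i) (x s) /\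
    Rle (Rabs (Derive (fun t => mpnn e phi psi r.+1 (upd x s t) i) (x s)))
        (Rmult (pow (Rmult alpha beta) r.+1) ((Ahat e ^+ r.+1)%R i s)).
Proof.
move=> _ [Hw Hmin] Hk x.
have Hk' : forall k, (k < r.+1)%N ->
    diff_grad_bounded (phi k) alpha /\ diff_grad_bounded (psi k) beta.
  by move=> k; rewrite ltnS; apply: Hk.
split; first exact: (@ex_lem n e phi psi x s alpha beta r.+1 Hk').
exact: (@bound_lem n e phi psi x s alpha beta r.+1 Hk' i Hw Hmin).
Qed.
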